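(* Let $P$ be a domain and $D\ge 2$ an integer, and let $R\subseteq P$. Suppose that initially each pixel of $R$ carries exactly one unit of snow, the pixels of $P\setminus R$ carry no snow, and the snowblower stands on a pixel of $P\setminus R$. Then every sequence of moves in the default model that obeys the capacity constraint and after which no pixel of $P$ carries snow consists of at least $|R|$ moves and of at least $\frac{1}{D}\sum_{q\in R}\mathrm{vdist}(q)$ moves. (Consequently the same bounds hold in the adjustable-throw and fixed-throw models.)
   Context: A pixel is a closed unit square $[i,i+1]\times[j,j+1]$, $i,j\in\mathbb{Z}$; two pixels are adjacent if they share a side. The domain $P$ is a finite set of pixels whose dual graph $G_P$ (vertex per pixel, edges between adjacent pixels) is connected. A boundary side is a side of a pixel of $P$ not shared with another pixel of $P$; a boundary pixel is a pixel of $P$ with a boundary side. For $q\in P$, $\mathrm{vdist}(q)=1+\min_{b}\mathrm{dist}_{G_P}(q,b)$, the minimum over boundary pixels $b$ of $P$. A move: the snowblower goes from its pixel $v$ to an adjacent pixel $u\in P$, and upon entering $u$ all snow on $u$ is thrown onto the pixel adjacent to $u$ in a chosen direction (default model: forward, left, right, or backward onto $v$; adjustable-throw: forward, left, right; fixed-throw: right, all relative to the motion $v\to u$); if that pixel is not in $P$ the snow disappears, otherwise it is added to the snow there. Capacity constraint: at all times every pixel of $P$ carries at most $D$ units of snow. *)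

(* Defs.v *)
From mathcomp Require Import all_boot all_order all_algebra.
Set Implicit Arguments. Unset Strict Implicit. Unset Printing Implicit Defensive.
Import Order.TTheory GRing.Theory Num.Theory.

(* A pixel [i,i+1]x[j,j+1] is identified with its lower-left corner (i,j). *)
Definition pixel := (int * int)%type.

Definition adj (p q : pixel) : bool :=
  (absz (p.1 - q.1)%R + absz (p.2 - q.2)%R == 1)%N.

Definition nbrs (p : pixel) : seq pixel :=
  [:: (p.1 + 1, p.2)%R; (p.1 - 1, p.2)%R; (p.1, p.2 + 1)%R; (p.1, p.2 - 1)%R].

(* A domain is given as a duplicate-free list of pixels. *)
Definition gstep (P : seq pixel) (a b : pixel) : bool :=
  [&& a \in P, b \in P & adj a b].

Fixpoint walkb (P : seq pixel) (n : nat) (a b : pixel) : bool :=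
  if n is n'.+1 then has (fun c => gstep P a c && walkb P n' c b) P
  else (a \in P) && (a == b).

Definition connected_domain (P : seq pixel) : Prop :=
  forall a b, a \in P -> b \in P -> exists n, walkb P n a b.

Definition boundary (P : seq pixel) (q : pixel) : bool :=
  (q \in P) && has (fun r => r \notin P) (nbrs q).

(* Graph distance in G_P from q to the nearest boundary pixel: the least n
   such that some boundary pixel is reachable by a walk of n edges.
   (For a finite connected P such an n exists and is < size P, so the
   search range iota 0 (size P) is sufficient.) *)
Definition bdist (P : seq pixel) (q : pixel) : nat :=
  find (fun n => has (fun b => boundary P b && walkb P n q b) P) (iota 0 (size P)).

Definition vdist (P : seq pixel) (q : pixel) : nat := (bdist P q).+1.

Definition snow := pixel -> nat.

(* A move in the default model is a pair (u, w): the snowblower moves from its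
   current pixel v to the adjacent pixel u of P, and the snow on u is thrown
   onto the pixel w adjacent to u (forward, left, right or backward = any of
   the four side-neighbours of u).  If w is not in P the snow disappears. *)
Definition move_ok (P : seq pixel) (v : pixel) (m : pixel * pixel) : bool :=
  [&& m.1 \in P, adj v m.1 & adj m.1 m.2].

Definition throw (P : seq pixel) (s : snow) (m : pixel * pixel) : snow :=
  fun x => if x == m.1 then 0
           else if (x == m.2) && (m.2 \in P) then s x + s m.1 else s x.

Fixpoint valid_run (P : seq pixel) (D : nat) (v : pixel) (s : snow)
    (ms : seq (pixel * pixel)) : Prop :=
  match ms with
  | [::] => True
  | m :: ms' =>
      move_ok P v m /\
      (forall x, x \in P -> throw P s m x <= D) /\
      valid_run P D m.1 (throw P s m) ms'
  end.

Fixpoint final_snow (P : seq pixel) (s : snow) (ms : seq (pixel * pixel)) : snow :=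
  match ms with
  | [::] => s
  | m :: ms' => final_snow P (throw P s m) ms'
  end.

Definition init_snow (R : seq pixel) : snow := fun x => if x \in R then 1 else 0.

(* Main.v *)
Require Import Defs.
From mathcomp Require Import all_boot all_order all_algebra zify.
Import GRing.Theory Num.Theory.
Set Implicit Arguments.
Unset Strict Implicit.

Lemma adj_nbrs (u w : pixel) : adj u w -> w \in nbrs u.
Proof.
case: u w => [a b] [c d]; rewrite /adj /nbrs /= !inE => /eqP H.
have : ((c = a + 1 /\ d = b) \/ (c = a - 1 /\ d = b) \/ (c = a /\ d = b + 1) \/ (c = a /\ d = b - 1))%R by lia.
move=> [[-> ->]|[[-> ->]|[[-> ->]|[-> ->]]]]; by rewrite !eqxx ?orbT.
Qed.

Lemma adj_neq (u w : pixel) : adj u w -> w != u.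
Proof. by move=> H; apply/eqP=> E; move: H; rewrite E /adj !subrr. Qed.

Lemma sum_if1 (P : seq pixel) (u : pixel) (c : nat) : uniq P ->
  \sum_(x <- P) (if x == u then c else 0) = if u \in P then c else 0.
Proof.
move=> uP; case: ifP => uin.
  rewrite (bigD1_seq u) //= eqxx big1 ?addn0 // => i /negbTE -> //.
by rewrite big1_seq // => i /= iP; case: eqP iP => // ->; rewrite uin.
Qed.

Lemma bdist_adj (P : seq pixel) (u w : pixel) :
  u \in P -> w \in P -> adj u w -> bdist P u <= (bdist P w).+1.
Proof.
move=> uP wP auw.
rewrite /bdist.
set n := find (fun n => has (fun b => boundary P b && walkb P n w b) P) _.
have hn : n <= size P by rewrite /n -[X in _ <= X](size_iota 0) find_size.
have [lt|ge] := ltnP n (size P); last first.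
  apply: leq_trans (find_size _ _) _; rewrite size_iota; lia.
have hh : has (fun n => has (fun b => boundary P b && walkb P n w b) P) (iota 0 (size P)) by rewrite has_find size_iota.
have := nth_find 0 hh.
rewrite -/n nth_iota // add0n => /hasP [b bP /andP [bb wb]].
set m := find _ _.
have [lt2|ge2] := ltnP n.+1 (size P); last first.
  apply: leq_trans (find_size _ _) _; rewrite size_iota; lia.
rewrite leqNgt; apply/negP => /(before_find 0).
rewrite nth_iota // add0n => /negP; apply.
apply/hasP; exists b => //; rewrite bb /=.
apply/hasP; exists w => //; rewrite wb andbT /gstep uP wP auw.
done.
Qed.

Lemma bdist_bnd (P : seq pixel) (u w : pixel) :
  u \in P -> w \notin P -> adj u w -> bdist P u = 0.
Proof.
move=> uP wP auw.
have : 0 < size P by rewrite lt0n size_eq0; apply/eqP => E; rewrite E in uP.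
rewrite /bdist; case: (size P) => // k _ /=.
suff -> : has (fun b => boundary P b && walkb P 0 u b) P by [].
apply/hasP; exists u => //; apply/andP; split; last by rewrite /= uP eqxx.
rewrite /boundary uP andTb.
by apply/hasP; exists w => //; apply: adj_nbrs.
Qed.

Definition Phi (P : seq pixel) (s : snow) := \sum_(x <- P) s x * vdist P x.

Lemma step (P : seq pixel) (D : nat) (v : pixel) (s : snow) (m : pixel * pixel) :
  uniq P -> move_ok P v m -> s m.1 <= D -> Phi P s <= Phi P (throw P s m) + D.
Proof.
case: m => u w uP /and3P [/= uin _ auw] /= sD.
set a := s u.
have nwu := adj_neq auw.
have nuw : u != w by rewrite eq_sym.
have pw : forall x, x \in P ->
  s x * vdist P x + (if x == w then a * vdist P w else 0) <=
  throw P s (u, w) x * vdist P x + (if x == u then a * vdist P u else 0).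
  move=> x xP; rewrite /throw /=.
  case: (eqVneq x u) => [->|xu].
    by rewrite (negbTE nuw) mul0n addn0 add0n.
  case: (eqVneq x w) => [xw|xw] /=; last by [].
  by rewrite -xw xP mulnDl addn0.
have : \sum_(x <- P | x \in P) (s x * vdist P x + (if x == w then a * vdist P w else 0)) <=
       \sum_(x <- P | x \in P) (throw P s (u, w) x * vdist P x + (if x == u then a * vdist P u else 0)).
  by apply: leq_sum => x; apply: pw.
rewrite -!big_seq !big_split /= !sum_if1 // uin -/(Phi P s) -/(Phi P _).
case: ifP => win.
  have := bdist_adj uin win auw; rewrite /vdist => h.
  have : a * (bdist P u).+1 <= a * (bdist P w).+2 by rewrite leq_mul2l ltnS h orbT.
  nia.
have := bdist_bnd uin (negbT win) auw; rewrite /vdist => ->.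
lia.
Qed.

Lemma run_phi (P : seq pixel) (D : nat) : uniq P -> forall ms v s,
  valid_run P D v s ms -> (forall x, x \in P -> s x <= D) ->
  Phi P s <= Phi P (final_snow P s ms) + D * size ms.
Proof.
move=> uP; elim => [|m ms IH] v s /=; first by rewrite muln0 addn0.
move=> [mok [cap run]] sD.
have m1P : m.1 \in P by case/and3P: mok.
have h1 := step uP mok (sD _ m1P).
have h2 := IH _ _ run cap.
rewrite mulnS; lia.
Qed.

Lemma visited (P : seq pixel) ms s x : 0 < s x -> final_snow P s ms x = 0 ->
  x \in map fst ms.
Proof.
elim: ms s => [|m ms IH] s /= hpos hfin; first by rewrite hfin in hpos.
rewrite in_cons; case E: (x == m.1) => //=.
apply: (IH (throw P s m)) => //.
rewrite /throw E; case: ifP => _ //; lia.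
Qed.

Theorem lemma2 (P R : seq pixel) (D : nat) (v0 : pixel)
    (ms : seq (pixel * pixel)) :
  uniq P -> connected_domain P -> (2 <= D)%N ->
  uniq R -> {subset R <= P} ->
  v0 \in P -> v0 \notin R ->
  valid_run P D v0 (init_snow R) ms ->
  (forall x, x \in P -> final_snow P (init_snow R) ms x = 0) ->
  (size R <= size ms)%N /\ (\sum_(q <- R) vdist P q <= D * size ms)%N.
Proof.
move=> uP _ D2 uR RP _ _ run fin.
split.
  rewrite -(size_map fst); apply: uniq_leq_size => // x xR.
  apply: (visited (P := P) (s := init_snow R)); last exact: fin (RP _ xR).
  by rewrite /init_snow xR.
have := run_phi uP run.
have -> : Phi P (final_snow P (init_snow R) ms) = 0.
  by rewrite /Phi big1_seq // => x /= xP; rewrite fin.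
have -> : Phi P (init_snow R) = \sum_(q <- R) vdist P q.
  rewrite /Phi (eq_bigr (fun x => if x \in R then vdist P x else 0)); last first.
    by move=> x _; rewrite /init_snow; case: ifP; rewrite ?mul1n ?mul0n.
  rewrite -big_mkcond -big_filter; apply: perm_big; apply: uniq_perm.
  - exact: filter_uniq.
  - exact: uR.
  by move=> x; rewrite mem_filter; case xR: (x \in R) => //=; rewrite RP.
rewrite add0n; apply => x _; rewrite /init_snow; case: ifP => _; lia.
Qed.
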